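(* Let $m\ge 2$ and let $\mathcal{R}_m^4$ be the rose graph with $N_m=3m+1$ nodes. The partial mean hitting time to the hub node is $$T_{\mathrm H}^{\mathrm T}=\frac{10}{3}$$ for the traditional unbiased random walk (TURW), $$T_{\mathrm H}^{\mathrm B}=\frac43+\frac{2\sqrt{2m-1}}{m}=\frac43+\frac{2\sqrt{6N_m-15}}{N_m-1}$$ for the NBCRW, and $$T_{\mathrm H}^{\mathrm M}=\frac43+\frac{2}{m}=\frac43+\frac{6}{N_m-1}$$ for the MERW.
   Context: The rose graph $\mathcal{R}_m^4$ ($m\ge2$) is obtained by gluing $m$ cycles of length 4 at a single common node, the hub; it has $3m+1$ nodes. Let $\mathbf{A}=(a_{ij})$ be the adjacency matrix and $d_i$ the degrees. TURW: $p_{ij}=a_{ij}/d_i$. MERW: with $\lambda_1$ the largest eigenvalue of $\mathbf{A}$ and $\psi_1$ the positive unit eigenvector, $p_{ij}=\frac{a_{ij}}{\lambda_1}\frac{\psi_{1j}}{\psi_{1i}}$. NBCRW: the non-backtracking matrix $\mathbf{B}$ is indexed by directed edges $i\to j$ (two per undirected edge) with $B_{i\to j,k\to l}=1$ if $j=k$ and $i\ne l$, else $0$; $v$ is a non-negative eigenvector for its leading (Perron–Frobenius) eigenvalue; $x_i=\sum_{j\in\mathcal{N}_i}v_{i\to j}$; and $p_{ij}=a_{ij}x_j/\sum_k a_{ik}x_k$. For a random walk, the hitting time $T_{ij}$ is the expected number of steps to first reach $j$ starting from $i$ ($T_{jj}=0$), and the partial mean hitting time to $j$ is $T_j=\frac{1}{N-1}\sum_{i}T_{ij}$,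 $N$ the number of nodes. *)

(* Defs.v *)
From mathcomp Require Import all_boot all_order all_algebra.
From mathcomp Require Import all_classical all_reals all_analysis.
From mathcomp Require Import complex.
Set Implicit Arguments. Unset Strict Implicit. Unset Printing Implicit Defensive.
Import Order.TTheory GRing.Theory Num.Theory.
Local Open Scope ring_scope.

(* Nodes are 0 .. 3m; node 0 is the hub.  A non-hub node v belongs to petal
   (v-1) %/ 3 at position (v-1) %% 3 in {0,1,2}; petal c is the 4-cycle
   hub - (3c+1) - (3c+2) - (3c+3) - hub. *)
Definition rose_edge (i j : nat) : bool :=
  [|| [&& i == 0, 0 < j & j.-1 %% 3 != 1]%N,
      [&& j == 0, 0 < i & i.-1 %% 3 != 1]%N
    | [&& 0 < i, 0 < j, i.-1 %/ 3 == j.-1 %/ 3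
        & (i.-1 %% 3 == 1) (+) (j.-1 %% 3 == 1)]%N].

Definition rose_adj (R : realType) (m : nat) : 'M[R]_((3 * m).+1) :=
  \matrix_(i, j) (rose_edge i j)%:R.

Definition deg (R : realType) (n : nat) (A : 'M[R]_n) (i : 'I_n) : R :=
  \sum_j A i j.

Definition turw (R : realType) (n : nat) (A : 'M[R]_n) : 'M[R]_n :=
  \matrix_(i, j) (A i j / deg A i).

Definition merw (R : realType) (n : nat) (A : 'M[R]_n) (lam : R) (psi : 'cV[R]_n)
  : 'M[R]_n :=
  \matrix_(i, j) (A i j / lam * (psi j 0 / psi i 0)).

Definition merw_data (R : realType) (n : nat) (A : 'M[R]_n) (lam : R) (psi : 'cV[R]_n)
  : Prop :=
  [/\ eigenvalue A lam,
      (forall mu : R, eigenvalue A mu -> mu <= lam),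
      A *m psi = lam *: psi,
      (forall i, 0 < psi i 0) &
      \sum_i psi i 0 ^+ 2 = 1].

Definition dedge (R : realType) (n : nat) (A : 'M[R]_n) :=
  {e : 'I_n * 'I_n | A e.1 e.2 != 0}.

Definition nbmat (R : realType) (n : nat) (A : 'M[R]_n) : 'M[R]_#|{: dedge A}| :=
  \matrix_(a, b)
    (let e := val (enum_val a) in let f := val (enum_val b) in
     ((e.2 == f.1) && (e.1 != f.2))%:R).

Definition nbcrw_data (R : realType) (n : nat) (A : 'M[R]_n) (rho : R)
  (v : 'cV[R]_#|{: dedge A}|) : Prop :=
  [/\ eigenvalue (nbmat A) rho,
      (forall mu : R[i],
          eigenvalue (map_mx (fun x : R => x%:C)%C (nbmat A)) mu ->
          `|mu| <= rho%:C)%C,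
      nbmat A *m v = rho *: v,
      v != 0 &
      (forall a, 0 <= v a 0)].

Definition nb_centrality (R : realType) (n : nat) (A : 'M[R]_n)
  (v : 'cV[R]_#|{: dedge A}|) (i : 'I_n) : R :=
  \sum_(a | (val (enum_val a)).1 == i) v a 0.

Definition nbcrw (R : realType) (n : nat) (A : 'M[R]_n) (v : 'cV[R]_#|{: dedge A}|)
  : 'M[R]_n :=
  \matrix_(i, j) (A i j * nb_centrality v j / \sum_k A i k * nb_centrality v k).

(* Q = P with column j set to zero (transitions into j are killed).
   For i <> j,  \sum_k (Q^n)_{ik} = Prob_i(X_1 <> j, ..., X_n <> j)
   = Prob_i(tau_j > n), where tau_j is the first hitting time of j. *)
Definition kill_col (R : realType) (n : nat) (P : 'M[R]_n) (j : 'I_n) : 'M[R]_n :=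
  \matrix_(a, b) (if b == j then 0 else P a b).

Definition survival (R : realType) (n : nat) (P : 'M[R]_n) (i j : 'I_n) (t : nat) : R :=
  \sum_k ((kill_col P j) ^+ t) i k.

(* Expected hitting time E_i[tau_j] = \sum_{t >= 0} Prob_i(tau_j > t),
   as an extended real (equal to +oo if the walk may never reach j);
   T_jj = 0. *)
Definition hitting_time (R : realType) (n : nat) (P : 'M[R]_n) (i j : 'I_n) : \bar R :=
  if i == j then 0%E
  else (\sum_(0 <= t <oo) (survival P i j t)%:E)%E.

Definition partial_mean_ht (R : realType) (n : nat) (P : 'M[R]_n) (j : 'I_n) : \bar R :=
  ((n.-1)%:R^-1)%:E * (\sum_i hitting_time P i j)%E.

Arguments nbmat {R n} A.
Arguments nbcrw_data {R n} A rho v.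
Arguments nb_centrality {R n} A v i.
Arguments nbcrw {R n} A v.

(* Main.v *)
Require Import Defs.
From mathcomp Require Import all_boot all_order all_algebra.
From mathcomp Require Import all_classical all_reals all_analysis.
From mathcomp Require Import complex.
From mathcomp Require Import zify ring lra.
Import Order.TTheory GRing.Theory Num.Theory.
Local Open Scope ring_scope.

Lemma re_pp c r c' r' : (r < 3)%N -> (r' < 3)%N ->
  rose_edge (3 * c+r+1) (3 * c'+r'+1) = (c == c') && ((r==1) (+) (r'==1))%N.
Proof.
move=> hr hr'. rewrite /rose_edge.
have -> : ((3 * c+r+1).-1 = 3 * c+r)%N by lia.
have -> : ((3 * c'+r'+1).-1 = 3 * c'+r')%N by lia.
have -> : ((3 * c+r) %/ 3 = c)%N by lia.
have -> : ((3 * c'+r') %/ 3 = c')%N by lia.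
have -> : ((3 * c+r) %% 3 = r)%N by lia.
have -> : ((3 * c'+r') %% 3 = r')%N by lia.
by rewrite ?addn1 /= ?andbF ?orbF.
Qed.

Lemma re_hp c r : (r < 3)%N -> rose_edge 0 (3 * c+r+1) = (r != 1)%N.
Proof.
move=> hr; rewrite /rose_edge.
have -> : ((3 * c+r+1).-1 = 3 * c+r)%N by lia.
have -> : ((3 * c+r) %% 3 = r)%N by lia.
by rewrite ?addn1 /= ?andbF ?orbF.
Qed.

Lemma re_ph c r : (r < 3)%N -> rose_edge (3 * c+r+1) 0 = (r != 1)%N.
Proof.
move=> hr; rewrite /rose_edge.
have -> : ((3 * c+r+1).-1 = 3 * c+r)%N by lia.
have -> : ((3 * c+r) %% 3 = r)%N by lia.
by rewrite ?addn1 /= ?andbF ?orbF.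
Qed.

Lemma re_hh : rose_edge 0 0 = false.
Proof. by []. Qed.

Lemma psum (R : realType) m (g : nat -> R) :
  \sum_(i < (3 * m).+1) g i =
  g 0%N + \sum_(c < m) (g (3 * c+0+1)%N + g (3 * c+1+1)%N + g (3 * c+2+1)%N).
Proof.
rewrite -(big_mkord xpredT g).
elim: m => [|m IH]; first by rewrite muln0 big_nat1 big_ord0 addr0.
have -> : ((3 * m.+1).+1 = ((3 * m).+1).+3)%N by lia.
rewrite big_nat_recr // big_nat_recr // big_nat_recr //= IH big_ord_recr /= -!addrA.
have -> : (3 * m+0+1 = (3 * m).+1)%N by lia.
have -> : (3 * m+1+1 = (3 * m).+2)%N by lia.
have -> : (3 * m+2+1 = (3 * m).+3)%N by lia.
done.
Qed.

Lemma sum_delta (R : realType) m c (X : nat -> R) : (c < m)%N ->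
  \sum_(c' < m) ((c == c')%:R * X c') = X c.
Proof.
move=> hc; rewrite (bigD1 (Ordinal hc)) //= eqxx mul1r big1 ?addr0 //.
move=> c' /negbTE; rewrite -val_eqE /= eq_sym => ->; by rewrite mul0r.
Qed.

Lemma nbr (R : realType) m c r (G : nat -> R) : (c < m)%N -> (r < 3)%N ->
  \sum_(k < (3 * m).+1) (rose_edge (3 * c+r+1) k)%:R * G k =
  (if r == 1 then G (3 * c+0+1)%N + G (3 * c+2+1)%N else G 0%N + G (3 * c+1+1)%N).
Proof.
move=> hc hr; rewrite (@psum _ _ (fun k => (rose_edge (3 * c+r+1) k)%:R * G k)) /= re_ph //.
under eq_bigr => c' _ do rewrite !re_pp //.
case: r hr => [|[|[|]]] // _ /=;
  under eq_bigr => c' _ do rewrite /= ?andbF ?andbT ?mul0r ?add0r ?addr0;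
  rewrite ?mul1r ?mul0r ?add0r ?big_split /=.
- by rewrite (@sum_delta _ _ _ (fun c' => G (3 * c' + 1 + 1)%N) hc).
- by rewrite (@sum_delta _ _ _ (fun c' => G (3 * c' + 0 + 1)%N) hc)
    (@sum_delta _ _ _ (fun c' => G (3 * c' + 2 + 1)%N) hc).
- by rewrite (@sum_delta _ _ _ (fun c' => G (3 * c' + 1 + 1)%N) hc).
Qed.

Lemma nbr_hub (R : realType) m (G : nat -> R) :
  \sum_(k < (3 * m).+1) (rose_edge 0 k)%:R * G k =
  \sum_(c < m) (G (3 * c+0+1)%N + G (3 * c+2+1)%N).
Proof.
rewrite (@psum _ _ (fun k => (rose_edge 0 k)%:R * G k)) /= mul0r add0r.
apply: eq_bigr => c _.
by rewrite !re_hp //= mul0r addr0 !mul1r.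
Qed.



Set Implicit Arguments. Unset Strict Implicit. Unset Printing Implicit Defensive.

Definition tc (R : realType) m (f : 'I_((3 * m).+1) -> R) (a b : R) : Prop :=
  forall c r, (c < m)%N -> (r < 3)%N ->
    f (inord (3 * c + r + 1)) = if r == 1%N then b else a.

Lemma inord_node m c r : (c < m)%N -> (r < 3)%N ->
  ((inord (3 * c + r + 1) : 'I_((3 * m).+1)) : nat) = (3 * c + r + 1)%N.
Proof. move=> hc hr; rewrite inordK //; lia. Qed.

Lemma node_neq0 m c r : (c < m)%N -> (r < 3)%N ->
  (inord (3 * c + r + 1) : 'I_((3 * m).+1)) != ord0.
Proof. by move=> hc hr; rewrite -val_eqE /= inord_node // addn1. Qed.

Lemma inord0' m : (inord 0 : 'I_((3 * m).+1)) = ord0.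
Proof. by apply: val_inj; rewrite /= inordK. Qed.

Lemma sumA (R : realType) m (i : 'I_((3 * m).+1)) (g : 'I_((3 * m).+1) -> R) :
  \sum_k rose_adj R m i k * g k =
  \sum_(k < (3 * m).+1) (rose_edge i k)%:R * g (inord k).
Proof. by apply: eq_bigr => k _; rewrite mxE inord_val. Qed.

Lemma decomp m (i : 'I_((3 * m).+1)) : i != ord0 ->
  exists c r, [/\ (c < m)%N, (r < 3)%N & i = inord (3 * c + r + 1)].
Proof.
move=> hi; exists (i.-1 %/ 3)%N, (i.-1 %% 3)%N.
have i0 : (0 < i)%N by rewrite lt0n; exact: hi.
have hlt := ltn_ord i.
split; [lia | lia | apply: val_inj; rewrite /= inordK; lia].
Qed.

Lemma nbrI (R : realType) m c r (g : 'I_((3 * m).+1) -> R) : (c < m)%N -> (r < 3)%N ->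
  \sum_(k < (3 * m).+1) (rose_edge (3 * c + r + 1) k)%:R * g (inord k) =
  (if r == 1%N then g (inord (3 * c + 0 + 1)) + g (inord (3 * c + 2 + 1))
   else g (inord 0) + g (inord (3 * c + 1 + 1))).
Proof. move=> hc hr; exact: (@nbr R m c r (fun k => g (inord k)) hc hr). Qed.

Lemma step (R : realType) m (P : 'M[R]_((3 * m).+1)) (w : 'I_((3 * m).+1) -> R) wa wb wh :
  tc w wa wb -> w ord0 = wh ->
  (forall i k, i != ord0 ->
     P i k = rose_adj R m i k * w k / \sum_l rose_adj R m i l * w l) ->
  wa != 0 -> wh + wb != 0 ->
  forall f a b, tc f a b ->
    tc (fun i => \sum_k kill_col P ord0 i k * f k) (wb / (wh + wb) * b) a.
Proof.
move=> hw hw0 hP wa0 whb0 f a b hf c r hc hr /=.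
have i0 := node_neq0 hc hr.
set i : 'I_((3 * m).+1) := inord _ in i0 *.
have -> : \sum_k kill_col P ord0 i k * f k =
   (\sum_k rose_adj R m i k * ((k != ord0)%:R * w k * f k)) /
      \sum_l rose_adj R m i l * w l.
  rewrite mulr_suml; apply: eq_bigr => k _; rewrite mxE hP //.
  by case: (k == ord0) => /=; [rewrite !mul0r mulr0 mul0r | rewrite mul1r; ring].
rewrite !sumA /i inord_node // (nbrI (fun k => (k != ord0)%:R * w k * f k)) // (nbrI w) //.
case: r hr {i i0} => [|[|[|]]] // hr /=;
  rewrite ?inord0' ?eqxx /= ?hw ?hf ?node_neq0 //= ?hw0 ?mul0r ?add0r ?mul1r.
- by rewrite mulrAC.
- have h2 : wa + wa != 0 by rewrite -mulr2n mulrn_eq0 negb_or wa0.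
  by rewrite -mulrDl mulrAC divff // mul1r.
- by rewrite mulrAC.
Qed.

Fixpoint ab (R : realType) (p : R) (t : nat) : R * R :=
  if t is t'.+1 then (p * (ab p t').2, (ab p t').1) else (1, 1).

Definition stepP (R : realType) m (P : 'M[R]_((3 * m).+1)) (p : R) : Prop :=
  forall f a b, tc f a b ->
    tc (fun i => \sum_k kill_col P ord0 i k * f k) (p * b) a.

Lemma surv_tc (R : realType) m (P : 'M[R]_((3 * m).+1)) p :
  stepP P p -> forall t, tc (fun i => survival P i ord0 t) (ab p t).1 (ab p t).2.
Proof.
move=> hs; elim=> [|t IH].
  move=> c r hc hr /=; rewrite /survival expr0.
  rewrite (bigD1 (inord (3 * c + r + 1))) //= big1 ?addr0.
    by rewrite mxE eqxx; case: (r == 1%N).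
  by move=> k hk; rewrite mxE eq_sym (negbTE hk).
move=> c r hc hr /=.
have := hs _ _ _ IH c r hc hr => /= <-.
rewrite /survival exprS.
have -> : kill_col P ord0 * kill_col P ord0 ^+ t =
  kill_col P ord0 *m kill_col P ord0 ^+ t by [].
rewrite (eq_bigr (fun k => \sum_l kill_col P ord0 (inord (3 * c + r + 1)) l *
   (kill_col P ord0 ^+ t) l k)); last by move=> k _; rewrite mxE.
rewrite exchange_big /=; apply: eq_bigr => l _; by rewrite mulr_sumr.
Qed.

Lemma ab_ge0 (R : realType) (p : R) t : 0 <= p -> 0 <= (ab p t).1 /\ 0 <= (ab p t).2.
Proof. move=> p0; elim: t => [|t [h1 h2]] /=; split => //; exact: mulr_ge0. Qed.

Lemma ab_part (R : realType) (p : R) T : 0 <= p -> p < 1 ->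
  \sum_(0 <= t < T) (ab p t).1 <= (1 + p) / (1 - p) /\
  \sum_(0 <= t < T) (ab p t).2 <= 2 / (1 - p).
Proof.
move=> p0 p1; have hp : 0 < 1 - p by rewrite subr_gt0.
have e1 : (1 + p) / (1 - p) = 1 + p * (2 / (1 - p)) by field; rewrite gt_eqF.
have e2 : 2 / (1 - p) = 1 + (1 + p) / (1 - p) by field; rewrite gt_eqF.
elim: T => [|T [h1 h2]].
  rewrite big_geq // big_geq //; split; apply: divr_ge0; lra.
rewrite !big_nat_recl //=; split.
  rewrite -mulr_sumr e1 lerD2l; exact: ler_wpM2l.
by rewrite e2 lerD2l.
Qed.

Lemma ab_series (R : realType) (p : R) : 0 <= p -> p < 1 ->
  (\sum_(0 <= t <oo) ((ab p t).1)%:E = ((1 + p) / (1 - p))%:E)%E /\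
  (\sum_(0 <= t <oo) ((ab p t).2)%:E = (2 / (1 - p))%:E)%E.
Proof.
move=> p0 p1; have hp : 0 < 1 - p by rewrite subr_gt0.
have g1 : forall t, (0 <= ((ab p t).1)%:E)%E by move=> t; rewrite lee_fin; case: (ab_ge0 t p0).
have g2 : forall t, (0 <= ((ab p t).2)%:E)%E by move=> t; rewrite lee_fin; case: (ab_ge0 t p0).
set E1 := (\sum_(0 <= t <oo) ((ab p t).1)%:E)%E.
set E2 := (\sum_(0 <= t <oo) ((ab p t).2)%:E)%E.
have ub1 : (E1 <= ((1 + p) / (1 - p))%:E)%E.
  apply: lime_le; first by apply: is_cvg_nneseries => n _ _; exact: g1.
  by apply: nearW => T; rewrite /= sumEFin lee_fin; case: (ab_part T p0 p1).
have ub2 : (E2 <= (2 / (1 - p))%:E)%E.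
  apply: lime_le; first by apply: is_cvg_nneseries => n _ _; exact: g2.
  by apply: nearW => T; rewrite /= sumEFin lee_fin; case: (ab_part T p0 p1).
have f1 : E1 \is a fin_num.
  rewrite ge0_fin_numE; last by apply: nneseries_ge0 => n _ _; exact: g1.
  exact: (le_lt_trans ub1 (ltry _)).
have f2 : E2 \is a fin_num.
  rewrite ge0_fin_numE; last by apply: nneseries_ge0 => n _ _; exact: g2.
  exact: (le_lt_trans ub2 (ltry _)).
have r1 : E1 = (1%:E + p%:E * E2)%E.
  rewrite /E1 (@nneseries_recl _ xpredT _ (fun k _ => g1 k)) //.
  rewrite -(@nneseries_addn _ (fun k => ((ab p k).1)%:E) 1) //=.
  congr (_ + _)%E.
  rewrite -nneseriesZl; last by move=> i _; exact: g2.
  by apply: congr_lim; apply/funext => n; apply: eq_bigr => i _; rewrite addn1 /= EFinM.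
have r2 : E2 = (1%:E + E1)%E.
  rewrite /E2 (@nneseries_recl _ xpredT _ (fun k _ => g2 k)) //.
  rewrite -(@nneseries_addn _ (fun k => ((ab p k).2)%:E) 1) //=.
  congr (_ + _)%E.
  by apply: congr_lim; apply/funext => n; apply: eq_bigr => i _; rewrite addn1.
move: r1 r2; rewrite -(fineK f1) -(fineK f2).
set x1 := fine E1; set x2 := fine E2.
rewrite -EFinM -!EFinD => -[e1] [e2].
have hx1 : x1 = (1 + p) / (1 - p).
  apply: (@mulIf _ (1 - p)); first by rewrite gt_eqF.
  rewrite divfK ?gt_eqF // mulrBr mulr1 {1}e1 e2; ring.
split; first by rewrite hx1.
by rewrite e2 hx1; congr (_%:E); field; rewrite gt_eqF.
Qed.

Definition Hn (R : realType) (p : R) (k : nat) : R :=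
  if k == 0%N then 0 else
  if (k.-1 %% 3 == 1)%N then 2 / (1 - p) else (1 + p) / (1 - p).

Lemma Hn_node (R : realType) (p : R) c r : (r < 3)%N ->
  Hn p (3 * c + r + 1) = if r == 1%N then 2 / (1 - p) else (1 + p) / (1 - p).
Proof.
move=> hr; rewrite /Hn.
have -> : (3 * c + r + 1 == 0)%N = false by rewrite addn1.
have -> : ((3 * c + r + 1).-1 %% 3 = r)%N by lia.
by [].
Qed.

Lemma hit_formula (R : realType) m (P : 'M[R]_((3 * m).+1)) p :
  0 <= p -> p < 1 -> stepP P p ->
  forall i, hitting_time P i ord0 = (Hn p i)%:E.
Proof.
move=> p0 p1 hs i; rewrite /hitting_time.
have [->|hi] := eqVneq i ord0; first by rewrite /Hn /=.
have [c [r [hc hr ->]]] := decomp hi.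
rewrite inord_node // Hn_node //.
have e : forall t, survival P (inord (3 * c + r + 1)) ord0 t =
   if r == 1%N then (ab p t).2 else (ab p t).1.
  by move=> t; exact: (surv_tc hs t hc hr).
case: (ab_series p0 p1) => s1 s2.
case: (r == 1%N) in e *.
  by rewrite -s2; apply: congr_lim; apply/funext => n; apply: eq_bigr => t _; rewrite e.
by rewrite -s1; apply: congr_lim; apply/funext => n; apply: eq_bigr => t _; rewrite e.
Qed.

Lemma pmht (R : realType) m (P : 'M[R]_((3 * m).+1)) p :
  (0 < m)%N -> 0 <= p -> p < 1 -> stepP P p ->
  partial_mean_ht P ord0 = ((2 * ((1 + p) / (1 - p)) + 2 / (1 - p)) / 3)%:E.
Proof.
move=> m0 p0 p1 hs; rewrite /partial_mean_ht.
under eq_bigr => i _ do rewrite (hit_formula p0 p1 hs).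
rewrite sumEFin -EFinM; congr (_%:E).
rewrite (@psum _ _ (fun k => Hn p k)) /=.
under eq_bigr => c _ do rewrite !Hn_node //=.
rewrite sumr_const card_ord /Hn /= add0r natrM -[X in _ * X]mulr_natl.
have hm : (m%:R : R) != 0 by rewrite pnatr_eq0 -lt0n.
have hp : 1 - p != 0 by rewrite subr_eq0 eq_sym lt_eqF.
by field; rewrite hp hm.
Qed.



Lemma weighted_step (R : realType) m (P : 'M[R]_((3 * m).+1)) (w : 'I_((3 * m).+1) -> R) wa wb wh :
  tc w wa wb -> w ord0 = wh ->
  (forall i k, i != ord0 ->
     P i k = rose_adj R m i k * w k / \sum_l rose_adj R m i l * w l) ->
  wa != 0 -> wh + wb != 0 -> stepP P (wb / (wh + wb)).
Proof. move=> hw hw0 hP wa0 whb0; exact: (step hw hw0 hP wa0 whb0). Qed.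

Lemma turw_res (R : realType) m : (0 < m)%N ->
  partial_mean_ht (turw (rose_adj R m)) ord0 = (10 / 3 : R)%:E.
Proof.
move=> m0.
have hs : stepP (turw (rose_adj R m)) (1 / (1 + 1)).
  apply: (@weighted_step _ _ _ (fun _ => 1)) => //.
  - by move=> c r _ _; case: (r == 1%N).
  - move=> i k _; rewrite mxE /deg mulr1; congr (_ / _).
    by apply: eq_bigr => l _; rewrite mulr1.
  - by rewrite oner_eq0.
have hp0 : 0 <= (1 / (1 + 1) : R) by rewrite divr_ge0 // addr_ge0.
have hp1 : (1 / (1 + 1) : R) < 1 by rewrite ltr_pdivrMr ?mul1r ?addr_gt0 //; lra.
rewrite (pmht m0 hp0 hp1 hs).
by congr (_%:E); field.
Qed.

Lemma eq5 (R : realType) m : (0 < m)%N ->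
  4 / 3 + 2 / m%:R = 4 / 3 + 6 / ((3 * m + 1)%:R - 1) :> R.
Proof.
move=> m0; have hm : (m%:R : R) != 0 by rewrite pnatr_eq0 -lt0n.
rewrite natrD natrM addrK; congr (_ + _); field; by rewrite hm.
Qed.

Lemma eq3 (R : realType) m : (0 < m)%N ->
  4 / 3 + 2 * Num.sqrt (2 * m%:R - 1) / m%:R
    = 4 / 3 + 2 * Num.sqrt (6 * (3 * m + 1)%:R - 15) / ((3 * m + 1)%:R - 1) :> R.
Proof.
move=> m0; have hm : (m%:R : R) != 0 by rewrite pnatr_eq0 -lt0n.
have -> : 6 * (3 * m + 1)%:R - 15 = 3 ^+ 2 * (2 * m%:R - 1) :> R.
  rewrite natrD natrM; ring.
have h1 : (1 <= m%:R :> R) by rewrite ler1n.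
rewrite sqrtrM ?sqr_ge0 // sqrtr_sqr ger0_norm // natrD natrM addrK.
congr (_ + _); field; by rewrite hm.
Qed.



Lemma final_val (R : realType) m (p : R) : (0 < m)%N -> p = 1 / (m%:R + 1) ->
  (2 * ((1 + p) / (1 - p)) + 2 / (1 - p)) / 3 = 4 / 3 + 2 / m%:R.
Proof.
move=> m0 ->; have hm : (m%:R : R) != 0 by rewrite pnatr_eq0 -lt0n.
have hm1 : (m%:R + 1 : R) != 0 by rewrite gt_eqF // ltr_wpDl.
by field; rewrite hm hm1.
Qed.

Lemma p_range (R : realType) m : (0 < m)%N ->
  0 <= 1 / (m%:R + 1) :> R /\ 1 / (m%:R + 1) < 1 :> R.
Proof.
move=> m0; have h1 : (0 : R) < m%:R + 1 by rewrite ltr_wpDl.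
split; first by rewrite divr_ge0 // ltW.
rewrite ltr_pdivrMr // mul1r ltrDr ltr0n //.
Qed.

Lemma merw_res (R : realType) m lam (psi : 'cV[R]_((3 * m).+1)) : (0 < m)%N ->
  merw_data (rose_adj R m) lam psi ->
  partial_mean_ht (merw (rose_adj R m) lam psi) ord0 = (4 / 3 + 2 / m%:R)%:E.
Proof.
move=> m0 [_ _ heq hpos _].
pose ps : 'I_((3 * m).+1) -> R := fun i => psi i 0.
have pos : forall i, 0 < ps i by move=> i; exact: hpos.
have eig : forall i, \sum_l rose_adj R m i l * ps l = lam * ps i.
  by move=> i; have := congr1 (fun M : 'cV[R]_((3 * m).+1) => M i 0) heq; rewrite !mxE => <-.
pose nd c r : 'I_((3 * m).+1) := inord (3 * c + r + 1).
have eqa : forall c, (c < m)%N -> ps ord0 + ps (nd c 1%N) = lam * ps (nd c 0%N).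
  by move=> c hc; rewrite -eig sumA inord_node // (nbrI ps) // inord0'.
have eqb : forall c, (c < m)%N -> ps (nd c 0%N) + ps (nd c 2%N) = lam * ps (nd c 1%N).
  by move=> c hc; rewrite -eig sumA inord_node // (nbrI ps).
have eqc : forall c, (c < m)%N -> ps ord0 + ps (nd c 1%N) = lam * ps (nd c 2%N).
  by move=> c hc; rewrite -eig sumA inord_node // (nbrI ps) // inord0'.
have eqh : \sum_(c < m) (ps (nd c 0%N) + ps (nd c 2%N)) = lam * ps ord0.
  rewrite -eig sumA /=.
  exact: (esym (@nbr_hub R m (fun k => ps (inord k)))).
have lam0 : 0 < lam.
  have : 0 < lam * ps (nd 0%N 0%N) by rewrite -(eqa 0%N m0) addr_gt0.
  by rewrite pmulr_lgt0.
have lamn0 : lam != 0 by rewrite gt_eqF.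
have eac : forall c, (c < m)%N -> ps (nd c 2%N) = ps (nd c 0%N).
  by move=> c hc; apply: (mulfI lamn0); rewrite -eqc // -eqa.
have key : forall c, (c < m)%N -> (lam ^+ 2 - 2) * ps (nd c 0%N) = lam * ps ord0.
  move=> c hc.
  have e2 := eqb c hc; rewrite eac // in e2.
  rewrite expr2 mulrBl -mulrA -(eqa c hc) mulrDr -e2; ring.
have d0 : lam ^+ 2 - 2 != 0.
  apply/negP => /eqP h; have := mulr_gt0 lam0 (pos ord0).
  by rewrite -(key 0%N m0) h mul0r ltxx.
set al := lam * ps ord0 / (lam ^+ 2 - 2).
have ha : forall c, (c < m)%N -> ps (nd c 0%N) = al.
  by move=> c hc; rewrite /al -(key c hc) mulrAC divff // mul1r.
have al0 : 0 < al by rewrite -(ha 0%N m0).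
set be := 2 * al / lam.
have hb : forall c, (c < m)%N -> ps (nd c 1%N) = be.
  move=> c hc; have e2 := eqb c hc; rewrite eac // ha // in e2.
  rewrite /be (_ : 2 * al = lam * ps (nd c 1%N)); last by rewrite -e2; ring.
  by rewrite [RHS]mulrC mulKf.
have htc : tc ps al be.
  move=> c r hc hr; case: r hr => [|[|[|]]] // _ /=.
  - exact: ha.
  - exact: hb.
  - by rewrite (eac c hc) (ha c hc).
have hl2 : lam ^+ 2 = 2 * m%:R + 2.
  have e : (al + al) *+ m = lam * ps ord0.
    rewrite -eqh (eq_bigr (fun _ => al + al)); first by rewrite sumr_const card_ord.
    by move=> c _; rewrite (eac c (ltn_ord c)) (ha c (ltn_ord c)).
  have k := key 0%N m0; rewrite ha // -e in k.
  have : (lam ^+ 2 - 2) * al = (2 * m%:R) * al by rewrite k -mulr_natl; ring.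
  move/(mulIf (lt0r_neq0 al0)) => h; rewrite -h; ring.
have hsum : ps ord0 + be = lam * al.
  by rewrite -(hb 0%N m0) -(ha 0%N m0) eqa.
have hs : stepP (merw (rose_adj R m) lam psi) (be / (ps ord0 + be)).
  apply: (@weighted_step _ _ _ ps al be (ps ord0)) => //.
  - move=> i k _; rewrite mxE eig /ps.
    have := hpos i; move/lt0r_neq0 => hi.
    by field; rewrite hi lamn0.
  - exact: lt0r_neq0.
  - by rewrite hsum mulf_neq0 // lt0r_neq0.
have pe : be / (ps ord0 + be) = 1 / (m%:R + 1).
  rewrite hsum /be.
  have -> : 2 * al / lam / (lam * al) = 2 / lam ^+ 2.
    by field; rewrite lamn0 (lt0r_neq0 al0).
  have hm1 : (m%:R + 1 : R) != 0 by rewrite gt_eqF // ltr_wpDl.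
  rewrite hl2; field; rewrite ?hm1 //.
  have h2 : (0 : R) < 2 * m%:R + 2 by have := ler0n R m; lra.
  by rewrite /= gt_eqF.
rewrite pe in hs; case: (p_range R m0) => p0 p1.
by rewrite (pmht m0 p0 p1 hs) (final_val m0 erefl).
Qed.



Lemma sumL1 (R : realType) n (A : 'M[R]_n) (F : 'I_#|{: dedge A}| -> R) :
  \sum_a F a = \sum_(x : dedge A) F (enum_rank x).
Proof.
rewrite (reindex enum_rank) //; exists enum_val => x _; [exact: enum_rankK | exact: enum_valK].
Qed.

Lemma sumL2 (R : realType) n (A : 'M[R]_n) (G : dedge A -> R) :
  \sum_(x : dedge A) G x =
  \sum_k \sum_l (if insub (k, l) is Some x then G x else 0).
Proof.
rewrite pair_big /=.
rewrite (eq_bigr (fun y : 'I_n * 'I_n => if A y.1 y.2 != 0 then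
   (if insub y is Some x then G x else 0) else 0)); last first.
  move=> [k l] _ /=; case: insubP => [x -> _|/negbTE -> //]; by [].
rewrite -big_mkcond /=.
rewrite (reindex_omap (val : dedge A -> 'I_n * 'I_n) insub); last first.
  by move=> y hy; rewrite insubT.
rewrite [RHS](eq_bigl xpredT) //.
  by apply: eq_bigr => x _; rewrite valK.
by move=> x; rewrite valK eqxx (valP x).
Qed.

Definition Wf (R : realType) n (A : 'M[R]_n) (v : 'cV[R]_#|{: dedge A}|) (i j : 'I_n) : R :=
  if insub (i, j) is Some x then v (enum_rank x) 0 else 0.

Lemma sum_delta1 (R : realType) n (i : 'I_n) (S : 'I_n -> R) :
  \sum_k (k == i)%:R * S k = S i.
Proof.
rewrite (bigD1 i) //= eqxx mul1r big1 ?addr0 // => k /negbTE ->; by rewrite mul0r.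
Qed.

Lemma Wf_A (R : realType) m (v : 'cV[R]_#|{: dedge (rose_adj R m)}|) i l :
  Wf v i l = rose_adj R m i l * Wf v i l.
Proof.
rewrite /Wf; case: insubP => [x hx _|hx]; last by rewrite mulr0.
move: hx; rewrite /= mxE; case: (rose_edge i l) => [_|]; first by rewrite mulr1n mul1r.
by rewrite eqxx.
Qed.

Lemma cent_W (R : realType) m (v : 'cV[R]_#|{: dedge (rose_adj R m)}|) i :
  nb_centrality (rose_adj R m) v i = \sum_l rose_adj R m i l * Wf v i l.
Proof.
rewrite /nb_centrality big_mkcond /= sumL1 sumL2.
rewrite -[RHS](sum_delta1 i (fun k => \sum_l rose_adj R m k l * Wf v k l)).
apply: eq_bigr => k _; rewrite mulr_sumr; apply: eq_bigr => l _.
rewrite -Wf_A /Wf; case: insubP => [x _ hx|_]; last by rewrite mulr0.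
by rewrite enum_rankK hx /=; case: (k == i) => /=; rewrite ?mul1r ?mul0r.
Qed.

Lemma eqE_W (R : realType) m rho (v : 'cV[R]_#|{: dedge (rose_adj R m)}|) i j :
  nbmat (rose_adj R m) *m v = rho *: v -> rose_adj R m i j != 0 ->
  rho * Wf v i j = \sum_l (i != l)%:R * (rose_adj R m j l * Wf v j l).
Proof.
move=> heq hij.
set x0 : dedge (rose_adj R m) := Sub (i, j) hij.
have hW : Wf v i j = v (enum_rank x0) 0 by rewrite /Wf insubT.
rewrite hW.
have := congr1 (fun M : 'cV[R]_#|{: dedge (rose_adj R m)}| => M (enum_rank x0) 0) heq.
rewrite !mxE => <-.
rewrite sumL1 sumL2.
rewrite -[RHS](sum_delta1 j (fun k => \sum_l (i != l)%:R * (rose_adj R m k l * Wf v k l))).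
apply: eq_bigr => k _; rewrite mulr_sumr; apply: eq_bigr => l _.
rewrite -Wf_A /Wf; case: insubP => [x _ hx|_]; last by rewrite !mulr0.
rewrite /nbmat mxE !enum_rankK hx /=.
by rewrite eq_sym; case: (k == j); case: (i != l); rewrite /= ?mulr1n ?mul1r ?mul0r.
Qed.

Definition nd m c r : 'I_((3 * m).+1) := inord (3 * c + r + 1).

Lemma nd_eq m c r c' r' : (c < m)%N -> (r < 3)%N -> (c' < m)%N -> (r' < 3)%N ->
  (nd m c r == nd m c' r') = (c == c') && (r == r').
Proof.
move=> hc hr hc' hr'; rewrite -val_eqE /= /nd !inord_node //.
apply/eqP/andP => [h|[/eqP -> /eqP ->] //]; split; apply/eqP; lia.
Qed.

Lemma nd_neq0 m c r : (c < m)%N -> (r < 3)%N -> (nd m c r == ord0) = false.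
Proof. by move=> hc hr; apply/negbTE; exact: node_neq0. Qed.

Lemma ord0_neqnd m c r : (c < m)%N -> (r < 3)%N -> (ord0 == nd m c r) = false.
Proof. by move=> hc hr; rewrite eq_sym nd_neq0. Qed.

Lemma adj_nd (R : realType) m c r c' r' : (c < m)%N -> (r < 3)%N -> (c' < m)%N -> (r' < 3)%N ->
  rose_adj R m (nd m c r) (nd m c' r') = ((c == c') && ((r == 1%N) (+) (r' == 1%N)))%:R.
Proof. by move=> *; rewrite mxE /nd !inord_node // re_pp. Qed.

Lemma adj_h (R : realType) m c r : (c < m)%N -> (r < 3)%N ->
  rose_adj R m ord0 (nd m c r) = (r != 1%N)%:R.
Proof. by move=> *; rewrite mxE /nd inord_node //= re_hp. Qed.

Lemma adj_h' (R : realType) m c r : (c < m)%N -> (r < 3)%N ->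
  rose_adj R m (nd m c r) ord0 = (r != 1%N)%:R.
Proof. by move=> *; rewrite mxE /nd inord_node //= re_ph. Qed.

Lemma nb_eval (R : realType) m c r (g : 'I_((3 * m).+1) -> R) : (c < m)%N -> (r < 3)%N ->
  \sum_l rose_adj R m (nd m c r) l * g l =
  (if r == 1%N then g (nd m c 0) + g (nd m c 2) else g ord0 + g (nd m c 1)).
Proof. by move=> hc hr; rewrite sumA /nd inord_node // nbrI // inord0'. Qed.

Lemma hub_eval (R : realType) m (g : 'I_((3 * m).+1) -> R) :
  \sum_l rose_adj R m ord0 l * g l = \sum_(c < m) (g (nd m c 0) + g (nd m c 2)).
Proof. by rewrite sumA /=; exact: (@nbr_hub R m (fun k => g (inord k))). Qed.

Lemma sum_cent (R : realType) n (A : 'M[R]_n) (v : 'cV[R]_#|{: dedge A}|) :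
  \sum_i nb_centrality A v i = \sum_a v a 0.
Proof.
rewrite (partition_big (fun a => (val (enum_val a)).1) xpredT) //=.
Qed.



Lemma nd_eq_diff m c c' r r' : (c < m)%N -> (c' < m)%N -> (r < 3)%N -> (r' < 3)%N ->
  r != r' -> (nd m c r == nd m c' r') = false.
Proof. by move=> hc hc' hr hr' /negbTE hrr; rewrite nd_eq // hrr andbF. Qed.

Lemma nd_eq_same m c c' r : (c < m)%N -> (c' < m)%N -> (r < 3)%N ->
  (nd m c r == nd m c' r) = (c == c').
Proof. by move=> hc hc' hr; rewrite nd_eq // eqxx andbT. Qed.

Lemma sum_hub_minus (R : realType) m c (X Y : nat -> R) : (c < m)%N ->
  \sum_(c' < m) (X c' + (~~ (c == c'))%:R * Y c') =
  \sum_(c' < m) (X c' + Y c') - Y c.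
Proof.
move=> hc; rewrite -(@sum_delta R m c Y hc) -sumrB; apply: eq_bigr => c' _.
by case: (c == c'%N); rewrite /= ?mulr1n ?mulr0n ?mul1r ?mul0r ?subr0 ?addr0 ?addrK.
Qed.

Ltac simp_nd := rewrite ?nd_eq ?nd_neq0 ?ord0_neqnd ?eqxx //=;
  rewrite ?mulr1n ?mulr0n ?mul0r ?mul1r ?add0r ?addr0.

Ltac adj_tac := by rewrite ?adj_h ?adj_h' ?adj_nd //= ?eqxx /= ?mulr1n oner_eq0.

Lemma nb_petal (R : realType) m rho (v : 'cV[R]_#|{: dedge (rose_adj R m)}|) c :
  nbcrw_data (rose_adj R m) rho v -> (c < m)%N ->
  let W := Wf v in let h : 'I_((3 * m).+1) := ord0 in
  let S := \sum_(c < m) (W h (nd m c 0) + W h (nd m c 2)) in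
  [/\ rho * W h (nd m c 0) = W (nd m c 0) (nd m c 1),
      rho * W (nd m c 0) (nd m c 1) = W (nd m c 1) (nd m c 2),
      rho * W (nd m c 1) (nd m c 2) = W (nd m c 2) h,
      rho * W (nd m c 2) h = S - W h (nd m c 2) &
   [/\ rho * W h (nd m c 2) = W (nd m c 2) (nd m c 1),
      rho * W (nd m c 2) (nd m c 1) = W (nd m c 1) (nd m c 0),
      rho * W (nd m c 1) (nd m c 0) = W (nd m c 0) h &
      rho * W (nd m c 0) h = S - W h (nd m c 0)]].
Proof.
move=> [_ _ heq _ _] hc W h S.
have E : forall i j, rose_adj R m i j != 0 ->
   rho * W i j = \sum_l rose_adj R m j l * ((i != l)%:R * W j l).
  move=> i j hij; rewrite /W (eqE_W heq hij); apply: eq_bigr => l _; by rewrite mulrCA.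
split; last split.
4: rewrite E; [rewrite hub_eval /S /W; under eq_bigr => c' _ do
     rewrite (@nd_eq_diff m c c' 2 0 hc (ltn_ord c')) // (@nd_eq_same m c c' 2 hc (ltn_ord c')) //= ?mulr1n ?mul1r;
     exact: (@sum_hub_minus R m c (fun c' => Wf v h (nd m c' 0)) (fun c' => Wf v h (nd m c' 2)))
   | adj_tac].
7: rewrite E; [rewrite hub_eval /S /W; under eq_bigr => c' _ do
     rewrite (@nd_eq_diff m c c' 0 2 hc (ltn_ord c')) // (@nd_eq_same m c c' 0 hc (ltn_ord c')) //= ?mulr1n ?mul1r addrC;
     under [X in _ = X - _]eq_bigr => c' _ do rewrite addrC;
     exact: (@sum_hub_minus R m c (fun c' => Wf v h (nd m c' 2)) (fun c' => Wf v h (nd m c' 0)))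
   | adj_tac].
all: rewrite E; [rewrite nb_eval //=; simp_nd; done | adj_tac].
Qed.

Lemma final_val2 (R : realType) m (s p : R) : (0 < m)%N -> 0 <= s -> p = s / (m%:R + s) ->
  (2 * ((1 + p) / (1 - p)) + 2 / (1 - p)) / 3 = 4 / 3 + 2 * s / m%:R.
Proof.
move=> m0 s0 ->; have hm : (m%:R : R) != 0 by rewrite pnatr_eq0 -lt0n.
have hmp : (0 : R) < m%:R by rewrite ltr0n.
have hm1 : (m%:R + s : R) != 0 by rewrite gt_eqF //; lra.
by field; rewrite hm hm1.
Qed.

Lemma nbcrw_res (R : realType) m rho (v : 'cV[R]_#|{: dedge (rose_adj R m)}|) :
  (2 <= m)%N -> nbcrw_data (rose_adj R m) rho v ->
  partial_mean_ht (nbcrw (rose_adj R m) v) ord0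
    = (4 / 3 + 2 * Num.sqrt (2 * m%:R - 1) / m%:R)%:E.
Proof.
move=> m2 hd; have m0 : (0 < m)%N by apply: leq_trans m2.
have hd' := hd; case: hd' => [_ _ heq vn0 vge0].
set W := Wf v; set h : 'I_((3 * m).+1) := ord0.
set S := \sum_(c < m) (W h (nd m c 0) + W h (nd m c 2)).
have Wge0 : forall i j, 0 <= W i j.
  by move=> i j; rewrite /W /Wf; case: insubP => // *; exact: vge0.
have x_h : nb_centrality (rose_adj R m) v h = S by rewrite cent_W hub_eval.
have x_nd : forall c r, (c < m)%N -> (r < 3)%N ->
    nb_centrality (rose_adj R m) v (nd m c r) =
    if r == 1%N then W (nd m c r) (nd m c 0) + W (nd m c r) (nd m c 2)
    else W (nd m c r) h + W (nd m c r) (nd m c 1).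
  by move=> c r hc hr; rewrite cent_W nb_eval.
have Q : forall c, (c < m)%N ->
    rho ^+ 4 * W h (nd m c 0) = S - W h (nd m c 2) /\
    rho ^+ 4 * W h (nd m c 2) = S - W h (nd m c 0).
  move=> c hc; rewrite /W /h /S; case: (nb_petal hd hc) => e1 e2 e3 e4 [e5 e6 e7 e8]; split.
  - by rewrite -e4 -e3 -e2 -e1; ring.
  - by rewrite -e8 -e7 -e6 -e5; ring.
have hS : rho ^+ 4 * S = (2 * m%:R - 1) * S.
  rewrite {1}/S mulr_sumr.
  rewrite (eq_bigr (fun c : 'I_m => (S + S) - (W h (nd m c 0) + W h (nd m c 2)))); last first.
    by move=> c _; rewrite mulrDr (Q c (ltn_ord c)).1 (Q c (ltn_ord c)).2; ring.
  rewrite sumrB sumr_const card_ord -/S -mulr_natl; ring.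
have S0 : S != 0.
  apply/negP => /eqP S0.
  have z : forall c, (c < m)%N -> W h (nd m c 0) = 0 /\ W h (nd m c 2) = 0.
    move=> c hc.
    have := @psumr_eq0P _ _ xpredT (fun c : 'I_m => W h (nd m c 0) + W h (nd m c 2)).
    move=> /(_ (fun i _ => addr_ge0 (Wge0 _ _) (Wge0 _ _)) S0 (Ordinal hc) erefl) /eqP.
    by rewrite paddr_eq0 ?Wge0 // => /andP[/eqP -> /eqP ->].
  have xz : forall i, nb_centrality (rose_adj R m) v i = 0.
    move=> i; have [->|hi] := eqVneq i ord0; first by rewrite x_h.
    have [c [r [hc hr ->]]] := decomp hi.
    rewrite -/(nd m c r) x_nd //.
    move: (z c hc); rewrite /W /h.
    case: (nb_petal hd hc) => e1 e2 e3 e4 [e5 e6 e7 e8] [z0 z2].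
    case: r hr => [|[|[|]]] // _ /=.
    - by rewrite -e7 -e6 -e5 -e1 z0 z2 !mulr0 addr0.
    - by rewrite -e6 -e5 -e2 -e1 z0 z2 !mulr0 addr0.
    - by rewrite -e3 -e2 -e1 -e5 z0 z2 !mulr0 addr0.
  have : \sum_a v a 0 = 0 by rewrite -sum_cent big1.
  move/psumr_eq0P => hv.
  move/negP: vn0; apply; apply/eqP/matrixP => a j; rewrite (ord1 j) mxE.
  by apply: hv => // b _; exact: vge0.
have r4 : rho ^+ 4 = 2 * m%:R - 1 by apply: (mulIf S0).
have hm2 : (2 : R) <= m%:R by rewrite (ler_nat R 2 m).
have rho0 : rho != 0.
  apply/negP => /eqP r0; move: r4; rewrite r0 expr0n /= => /eqP.
  apply/negP; rewrite eq_sym subr_eq0; apply/negP => /eqP; lra.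
have r41 : rho ^+ 4 - 1 != 0 by rewrite r4; apply/negP => /eqP; lra.
have uw : forall c, (c < m)%N -> W h (nd m c 0) = W h (nd m c 2).
  move=> c hc.
  have e : (rho ^+ 4 - 1) * (W h (nd m c 0) - W h (nd m c 2)) = 0.
    by rewrite mulrBr !mulrBl !mul1r (Q c hc).1 (Q c hc).2; ring.
  by move/eqP: e; rewrite mulf_eq0 (negbTE r41) /= subr_eq0 => /eqP.
have hmR : (m%:R : R) != 0 by rewrite pnatr_eq0 -lt0n.
set U := S / (2 * m%:R).
have hu : forall c, (c < m)%N -> W h (nd m c 0) = U.
  move=> c hc; have := (Q c hc).1; rewrite -(uw c hc) r4 => e.
  have eS : S = 2 * m%:R * W h (nd m c 0).
    by rewrite -(subrK (W h (nd m c 0)) S) -e; ring.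
  rewrite /U eS; field; by rewrite hmR.
have hw : forall c, (c < m)%N -> W h (nd m c 2) = U by move=> c hc; rewrite -(uw c hc) hu.
have Sge0 : 0 <= S by apply: sumr_ge0 => c _; apply: addr_ge0.
have Spos : 0 < S by rewrite lt_def S0.
have hmp : (0 : R) < m%:R by rewrite ltr0n.
have Upos : 0 < U by rewrite /U divr_gt0 // mulr_gt0.
have SU : S = 2 * m%:R * U by rewrite /U; field; rewrite hmR.
have htc : tc (nb_centrality (rose_adj R m) v) (rho ^+ 3 * U + rho * U) (rho ^+ 2 * U + rho ^+ 2 * U).
  move=> c r hc hr; rewrite -/(nd m c r) x_nd //.
  move: (hu c hc) (hw c hc); rewrite /W /h.
  case: (nb_petal hd hc) => e1 e2 e3 e4 [e5 e6 e7 e8] z0 z2.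
  case: r hr => [|[|[|]]] // _ /=.
  - by rewrite -e7 -e6 -e5 -e1 z0 z2; ring.
  - by rewrite -e6 -e5 -e2 -e1 z0 z2; ring.
  - by rewrite -e3 -e2 -e1 -e5 z0 z2; ring.
have wa0 : rho ^+ 3 * U + rho * U != 0.
  have -> : rho ^+ 3 * U + rho * U = rho * ((rho ^+ 2 + 1) * U) by ring.
  rewrite mulf_neq0 // mulf_neq0 ?gt_eqF //.
  by rewrite ltr_pwDr // sqr_ge0.
have r2U : 0 <= rho ^+ 2 * U by rewrite mulr_ge0 // ?sqr_ge0 // ltW.
have whb0 : S + (rho ^+ 2 * U + rho ^+ 2 * U) != 0.
  by rewrite gt_eqF //; lra.
have hP : forall i k, i != ord0 ->
    nbcrw (rose_adj R m) v i k = rose_adj R m i k * nb_centrality (rose_adj R m) v k /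
      \sum_l rose_adj R m i l * nb_centrality (rose_adj R m) v l.
  by move=> i k _; rewrite mxE.
have hs := weighted_step htc x_h hP wa0 whb0.
set s := Num.sqrt (2 * m%:R - 1).
have s0 : 0 <= s by apply: sqrtr_ge0.
have rs : rho ^+ 2 = s.
  rewrite /s -r4 (_ : 4%N = (2 * 2)%N) // exprM sqrtr_sqr ger0_norm //.
  exact: sqr_ge0.
have pe : (rho ^+ 2 * U + rho ^+ 2 * U) / (S + (rho ^+ 2 * U + rho ^+ 2 * U))
    = s / (m%:R + s).
  rewrite SU rs; field.
  have sU : 0 <= s * U by rewrite mulr_ge0 // ltW.
  have mU : 0 < m%:R * U by rewrite mulr_gt0.
  apply/andP; split; rewrite gt_eqF //; nra.
rewrite pe in hs.
have p0 : 0 <= s / (m%:R + s) by rewrite divr_ge0 //; lra.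
have p1 : s / (m%:R + s) < 1 by rewrite ltr_pdivrMr ?mul1r; lra.
by rewrite (pmht m0 p0 p1 hs) (final_val2 m0 s0 erefl).
Qed.

Unset Implicit Arguments.

Theorem theorem6 (R : realType) (m : nat) : (2 <= m)%N ->
  let A := rose_adj R m in
  let hub : 'I_((3 * m).+1) := ord0 in
  let Nm : R := (3 * m + 1)%:R in
  [/\ partial_mean_ht (turw A) hub = (10 / 3 : R)%:E,
      (forall (rho : R) (v : 'cV[R]_#|{: dedge A}|), nbcrw_data A rho v ->
         partial_mean_ht (nbcrw A v) hub
           = (4 / 3 + 2 * Num.sqrt (2 * m%:R - 1) / m%:R)%:E),
      4 / 3 + 2 * Num.sqrt (2 * m%:R - 1) / m%:R
        = 4 / 3 + 2 * Num.sqrt (6 * Nm - 15) / (Nm - 1),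
      (forall (lam : R) (psi : 'cV[R]_((3 * m).+1)), merw_data A lam psi ->
         partial_mean_ht (merw A lam psi) hub = (4 / 3 + 2 / m%:R)%:E) &
      4 / 3 + 2 / m%:R = 4 / 3 + 6 / (Nm - 1) :> R].
Proof.
move=> m2 A hub Nm.
have m0 : (0 < m)%N by apply: leq_trans m2.
split.
- exact: turw_res m0.
- by move=> rho v hd; exact: nbcrw_res m2 hd.
- exact: eq3 m0.
- by move=> lam psi hd; exact: merw_res m0 hd.
- exact: eq5 m0.
Qed.
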